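(* In any two-player perfect-information game, let $U_s$ be the exact EPFs and $U'_s=\bigwedge_{s'\in\mathcal C(s)}(U_{s'}\triangleright\beta(s'))$ for non-leaf $s$ (with $U'_\ell=U_\ell$ for leaves). Let $\{\tilde U_s\}$ be learned EPFs and $\tilde U'_s$ their one-step lookahead targets, all as in the context. Then for every $s\in\mathcal S$, $$\mathrm{Dom}[U_s]=\mathrm{Dom}[U'_s]=\mathrm{Dom}[\tilde U_s]=\mathrm{Dom}[\tilde U'_s]=[\underline V(s),\overline V(s)],$$ where $\mathrm{Dom}[h]=\{\mu: h(\mu)>-\infty\}$.
   Context: A two-player perfect-information game is a finite rooted tree with states $\mathcal S$. Its leaves $\mathcal L$ carry payoffs $r_1(\ell),r_2(\ell)$ for the leader $\mathsf P_1$ and the follower $\mathsf P_2$. Non-leaf states are partitioned into leader states $\mathcal S_1$ and follower states $\mathcal S_2$, and $\mathcal C(s)$ denotes the children of $s$. Bounds, defined by backward induction: - $\underline V(\ell)=\overline V(\ell)=r_2(\ell)$ for leaves; - $\underline V(s)=\min_{s'}\underline V(s')$ for $s\in\mathcal S_1$; - $\underline V(s)=\max_{s'}\underline V(s')$ for $s\in\mathcal S_2$; - $\overline V(s)=\max_{s'}\overline V(s')$ for every non-leaf $s$. For $s\in\mathcal S_2$ and $s'\in\mathcal C(s)$, let $\tau(s')=\max_{s^!\in\mathcal C(s),s^!\ne s'}\underline V(s^!)$. Let $\beta(s')=\tau(s')$ if the parent of $s'$ is in $\mathcal S_2$, and $-\infty$ if it is in $\mathcal S_1$. Operators, for $g:\mathbb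 R\to\mathbb R\cup\{-\infty\}$: - $\bigwedge_i g_i$ is the pointwise infimum of all concave $h\ge\max_i g_i$; - $[g\triangleright t](\mu)=g(\mu)$ for $\mu\ge t$ and $-\infty$ otherwise. Exact EPFs: $U_\ell(\mu)=r_1(\ell)$ if $\mu=r_2(\ell)$ and $-\infty$ otherwise; $U_s=\bigwedge_{s'\in\mathcal C(s)}(U_{s'}\triangleright\beta(s'))$. Learned EPFs: $\tilde U_\ell=U_\ell$ for leaves. For non-leaf $s$, $\tilde U_s$ is the piecewise linear interpolation of finitely many points with $x$-coordinates in $[\underline V(s),\overline V(s)]$ including both endpoints. It is real-valued on that interval and $-\infty$ outside. Targets: $\tilde U'_s=\bigwedge_{s'\in\mathcal C(s)}(\tilde U_{s'}\triangleright\beta(s'))$ for non-leaf $s$, and $\tilde U'_\ell=\tilde U_\ell$. *)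

(* Defs.v *)
From HB Require Import structures.
From mathcomp Require Import all_boot all_order all_algebra.
From mathcomp Require Import all_classical all_reals.
From mathcomp Require Import ereal.

Set Implicit Arguments.
Unset Strict Implicit.
Unset Printing Implicit Defensive.

Import Order.TTheory GRing.Theory Num.Theory.
Local Open Scope classical_set_scope.
Local Open Scope ring_scope.

Section Game.
Variable R : realType.

(* A finite rooted game tree.  [Leaf r1 r2] is a leaf with payoffs
   r1 (leader) and r2 (follower).  [Node leader c cs] is a non-leaf state
   with the (nonempty) list of children [c :: cs]; [leader = true] means the
   state belongs to S_1 (leader), [false] means S_2 (follower). *)
Inductive game : Type :=
| Leaf of R & R
| Node of bool & game & seq game.

Definition children (g : game) : seq game :=
  match g with Leaf _ _ => [::] | Node _ c cs => c :: cs end.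

(* States of the tree are addressed by paths (lists of child indices) from
   the root; [subtree g p] is the state at path p (if p is valid). *)
Fixpoint subtree (g : game) (p : seq nat) {struct p} : option game :=
  match p with
  | [::] => Some g
  | i :: p' => if (i < size (children g))%N
               then subtree (nth g (children g) i) p' else None
  end.

Fixpoint Vlo (g : game) : R :=
  match g with
  | Leaf _ r2 => r2
  | Node b c cs => if b then foldr Num.min (Vlo c) (map Vlo cs)
                   else foldr Num.max (Vlo c) (map Vlo cs)
  end.

Fixpoint Vhi (g : game) : R :=
  match g with
  | Leaf _ r2 => r2
  | Node _ c cs => foldr Num.max (Vhi c) (map Vhi cs)
  end.

Definition tau (ch : seq game) (i : nat) : \bar R :=
  foldr (fun x y => Order.max x y) -oo%E
    [seq (Vlo (nth (Leaf 0 0) ch j))%:E | j <- iota 0 (size ch) & j != i].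

Definition beta (leader : bool) (ch : seq game) (i : nat) : \bar R :=
  if leader then -oo%E else tau ch i.

(* Extended-valued functions R -> R u {-oo} are modelled as R -> \bar R. *)

(* Concavity of h : R -> R u {-oo}: its hypograph is convex. *)
Definition concave_ext (h : R -> \bar R) : Prop :=
  forall (x y a b t : R), (0 <= t <= 1)%R ->
    (a%:E <= h x)%E -> (b%:E <= h y)%E ->
    (((t * a + (1 - t) * b)%R)%:E <= h (t * x + (1 - t) * y)%R)%E.

Definition env (gs : seq (R -> \bar R)) : R -> \bar R :=
  fun mu => ereal_inf
    [set h mu | h in [set h : R -> \bar R |
        concave_ext h /\ (forall x, h x != +oo%E) /\
        (forall g, g \in gs -> forall x, (g x <= h x)%E)]].

Definition trunc (g : R -> \bar R) (t : \bar R) : R -> \bar R :=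
  fun mu => if (t <= mu%:E)%E then g mu else -oo%E.

Definition leafEPF (r1 r2 : R) : R -> \bar R :=
  fun mu => if mu == r2 then r1%:E else -oo%E.

Fixpoint U (g : game) : R -> \bar R :=
  match g with
  | Leaf r1 r2 => leafEPF r1 r2
  | Node b c cs =>
      let Us := U c :: map U cs in
      env [seq trunc (nth (fun _ => -oo%E) Us i) (beta b (c :: cs) i)
          | i <- iota 0 (size Us)]
  end.

Definition U' (g : game) : R -> \bar R :=
  match g with
  | Leaf _ _ => U g
  | Node b c cs =>
      env [seq trunc (U (nth c (c :: cs) i)) (beta b (c :: cs) i)
          | i <- iota 0 (size (c :: cs))]
  end.

Definition Dom (h : R -> \bar R) : set R := [set mu | (-oo < h mu)%E].

Definition is_pwl (h : R -> \bar R) (lo hi : R) : Prop :=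
  exists pts : seq (R * R),
  [/\ pts != [::],
      sorted (fun a b => a.1 < b.1)%R pts,
      (head (0, 0) pts).1 = lo &
      (last (0, 0) pts).1 = hi] /\
  [/\ (forall q, q \in pts -> h q.1 = q.2%:E),
      (forall k, (k.+1 < size pts)%N ->
         let a := nth (0, 0) pts k in let b := nth (0, 0) pts k.+1 in
         forall mu, (a.1 <= mu <= b.1)%R ->
           h mu = ((a.2 + (mu - a.1) * (b.2 - a.2) / (b.1 - a.1))%R)%:E)
    & (forall mu, ~ (lo <= mu <= hi)%R -> h mu = -oo%E)].

Definition learned (g : game) (Ut : seq nat -> R -> \bar R) : Prop :=
  forall p s, subtree g p = Some s ->
    match s with
    | Leaf r1 r2 => Ut p = leafEPF r1 r2
    | Node _ _ _ => is_pwl (Ut p) (Vlo s) (Vhi s)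
    end.

Definition target (Ut : seq nat -> R -> \bar R) (p : seq nat) (s : game)
  : R -> \bar R :=
  match s with
  | Leaf _ _ => Ut p
  | Node b c cs =>
      env [seq trunc (Ut (rcons p i)) (beta b (c :: cs) i)
          | i <- iota 0 (size (c :: cs))]
  end.

End Game.

(* Main.v *)
Require Import Defs.
From HB Require Import structures.
From mathcomp Require Import all_boot all_order all_algebra.
From mathcomp Require Import all_classical all_reals.
From mathcomp Require Import ereal.
Import Order.TTheory GRing.Theory Num.Theory.
Local Open Scope classical_set_scope.
Local Open Scope ring_scope.

From mathcomp Require Import ring lra.

Section Aux.
Context {d : Order.disp_t} {T : orderType d}.

Lemma fmax_ge (a : T) (l : seq T) x : x \in a :: l -> (x <= foldr Order.max a l)%O.
Proof.
elim: l x => [|y l IH] x; first by rewrite inE => /eqP ->.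
rewrite /= !inE => /orP [/eqP ->|/orP [/eqP ->|H]].
- by rewrite le_max; apply/orP; right; apply: IH; rewrite mem_head.
- by rewrite le_max lexx.
- by rewrite le_max; apply/orP; right; apply: IH; rewrite inE H orbT.
Qed.

Lemma fmax_mem (a : T) (l : seq T) : foldr Order.max a l \in a :: l.
Proof.
elim: l => [|y l IH] /=; first by rewrite mem_head.
case: (leP y (foldr Order.max a l)) => _.
- by move: IH; rewrite !inE => /orP [->|->]; rewrite ?orbT.
- by rewrite !inE eqxx orbT.
Qed.

Lemma fmax_le (a : T) (l : seq T) y : (forall x, x \in a :: l -> x <= y)%O ->
  (foldr Order.max a l <= y)%O.
Proof. by move=> H; apply: H; apply: fmax_mem. Qed.

Lemma fmin_ge (a : T) (l : seq T) x : x \in a :: l -> (foldr Order.min a l <= x)%O.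
Proof.
elim: l x => [|y l IH] x; first by rewrite inE => /eqP ->.
rewrite /= !inE => /orP [/eqP ->|/orP [/eqP ->|H]].
- by rewrite ge_min; apply/orP; right; apply: IH; rewrite mem_head.
- by rewrite ge_min lexx.
- by rewrite ge_min; apply/orP; right; apply: IH; rewrite inE H orbT.
Qed.

Lemma fmin_mem (a : T) (l : seq T) : foldr Order.min a l \in a :: l.
Proof.
elim: l => [|y l IH] /=; first by rewrite mem_head.
case: (leP y (foldr Order.min a l)) => _.
- by rewrite !inE eqxx orbT.
- by move: IH; rewrite !inE => /orP [->|->]; rewrite ?orbT.
Qed.
End Aux.

Section Env.
Variable R : realType.

Lemma unif_bound (T : eqType) (l : seq T) (B : T -> R -> \bar R) :
  (forall i, i \in l -> exists M : R, forall x, (B i x <= M%:E)%E) ->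
  exists M : R, forall i, i \in l -> forall x, (B i x <= M%:E)%E.
Proof.
elim: l => [|j l IH] H; first by exists 0.
have [M1 H1] := H j (mem_head _ _).
have [M2 H2] : exists M : R, forall i, i \in l -> forall x, (B i x <= M%:E)%E.
  by apply: IH => i Hi; apply: H; rewrite inE Hi orbT.
exists (Num.max M1 M2) => i; rewrite inE => /orP [/eqP -> | Hi] x.
- by apply: (le_trans (H1 x)); rewrite lee_fin le_max lexx.
- by apply: (le_trans (H2 i Hi x)); rewrite lee_fin le_max lexx orbT.
Qed.

Lemma env_dom (fs : seq (R -> \bar R)) (lo hi M : R) :
  lo <= hi ->
  (forall f, f \in fs -> forall x, (f x <= M%:E)%E) ->
  (forall f, f \in fs -> forall x, (-oo < f x)%E -> lo <= x <= hi) ->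
  (exists2 f, f \in fs & (-oo < f lo)%E) -> (exists2 f, f \in fs & (-oo < f hi)%E) ->
  Dom (env fs) = `[lo, hi]%classic /\ forall x, (env fs x <= M%:E)%E.
Proof.
move=> Hlh HM Hdom [f1 Hf1 Hlo] [f2 Hf2 Hhi].
split; last first.
  move=> x; apply: ereal_inf_lbound; exists (fun _ => M%:E) => //; split.
    move=> x0 y0 a b t /andP [t0 t1]; rewrite /= !lee_fin => Ha Hb.
    nra.
  by split => // f Hf; apply: HM.
have fin : forall f z, f \in fs -> (-oo < f z)%E -> exists a : R, f z = a%:E.
  move=> f z Hf; case E: (f z) => [a| |] // _; first by exists a.
  by have := HM f Hf z; rewrite E.
rewrite /Dom; apply/seteqP; split => mu /=; rewrite in_itv /=.
- move=> Hmu; apply/negPn/negP => Hout.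
  have : (env fs mu <= -oo)%E.
    apply: ereal_inf_lbound.
    exists (fun x => if lo <= x <= hi then M%:E else -oo%E); last by rewrite (negbTE Hout).
    split.
      move=> x y a b t /andP [t0 t1].
      case: ifP => [/andP [Hx1 Hx2]|]; last by rewrite leeNy_eq.
      case: ifP => [/andP [Hy1 Hy2]|]; last by rewrite leeNy_eq.
      rewrite !lee_fin => Ha Hb.
      have -> : lo <= t * x + (1 - t) * y <= hi by apply/andP; split; nra.
      by rewrite lee_fin; nra.
    split; first by move=> x; case: ifP.
    move=> f Hf x; case: ifP => Hx; first exact: HM.
    case E: (f x) => [a| |] //.
    + by have := Hdom f Hf x; rewrite E ltNyr Hx => /(_ isT).
    + by have := HM f Hf x; rewrite E.
  by rewrite leeNy_eq => /eqP E; move: Hmu; rewrite E.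
- move=> /andP [H1 H2].
  have [a Ea] := fin f1 lo Hf1 Hlo.
  have [b Eb] := fin f2 hi Hf2 Hhi.
  case: (eqVneq lo hi) => [Eq|Neq].
    have Emu : mu = lo by apply/eqP; rewrite eq_le H1 andbT; by move: H2; rewrite -Eq.
    apply: (@lt_le_trans _ _ a%:E); first by rewrite ltNyr.
    apply/ereal_infP => y [h [Hc [Hnf Hmaj]] <-].
    by rewrite Emu -Ea; apply: Hmaj.
  have lt : lo < hi by rewrite lt_neqAle Neq Hlh.
  set t := (hi - mu) / (hi - lo).
  have t0 : 0 <= t by rewrite divr_ge0 // subr_ge0.
  have t1 : t <= 1 by rewrite ler_pdivrMr ?subr_gt0 // mul1r; lra.
  have Emu : mu = t * lo + (1 - t) * hi.
    rewrite /t; field; lra.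
  apply: (@lt_le_trans _ _ (t * a + (1 - t) * b)%:E); first by rewrite ltNyr.
  apply/ereal_infP => y [h [Hc [Hnf Hmaj]] <-].
  rewrite Emu; apply: Hc; first by rewrite t0 t1.
    by rewrite -Ea; apply: Hmaj.
  by rewrite -Eb; apply: Hmaj.
Qed.
End Env.

Set Implicit Arguments.
Section G.
Variable R : realType.
Implicit Types (c : game R) (cs : seq (game R)).

Lemma Vhi_node b c cs : Vhi (Node b c cs) = foldr Num.max (Vhi c) (map (@Vhi R) cs).
Proof. by []. Qed.
Lemma Vlo_nodeT c cs : Vlo (Node true c cs) = foldr Num.min (Vlo c) (map (@Vlo R) cs).
Proof. by []. Qed.
Lemma Vlo_nodeF c cs : Vlo (Node false c cs) = foldr Num.max (Vlo c) (map (@Vlo R) cs).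
Proof. by []. Qed.

Lemma nth_mem_map (f : game R -> R) ch c i : (i < size ch)%N -> f (nth c ch i) \in map f ch.
Proof. by move=> Hi; rewrite -(nth_map c 0) //; apply: mem_nth; rewrite size_map. Qed.

Lemma mem_map_nth (f : game R -> R) ch c v : v \in map f ch ->
  exists2 i, (i < size ch)%N & f (nth c ch i) = v.
Proof.
move=> Hv; exists (index v (map f ch)); first by rewrite -(size_map f) index_mem.
by rewrite -(nth_map c 0) ?nth_index // -(size_map f) index_mem.
Qed.

Lemma Vhi_ge b c cs i : (i < size (c :: cs))%N ->
  Vhi (nth c (c :: cs) i) <= Vhi (Node b c cs).
Proof. by move=> Hi; rewrite Vhi_node; apply: fmax_ge; exact: (nth_mem_map (@Vhi R) (c :: cs) c i Hi). Qed.

Lemma Vhi_ex b c cs : exists2 i, (i < size (c :: cs))%N &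
  Vhi (nth c (c :: cs) i) = Vhi (Node b c cs).
Proof. by rewrite Vhi_node; apply: mem_map_nth; exact: fmax_mem. Qed.

Lemma Vlo_le_min c cs i : (i < size (c :: cs))%N ->
  Vlo (Node true c cs) <= Vlo (nth c (c :: cs) i).
Proof. by move=> Hi; rewrite Vlo_nodeT; apply: fmin_ge; exact: (nth_mem_map (@Vlo R) (c :: cs) c i Hi). Qed.

Lemma Vlo_ex_min c cs : exists2 i, (i < size (c :: cs))%N &
  Vlo (nth c (c :: cs) i) = Vlo (Node true c cs).
Proof. by rewrite Vlo_nodeT; apply: mem_map_nth; exact: fmin_mem. Qed.

Lemma Vlo_ge_max c cs i : (i < size (c :: cs))%N ->
  Vlo (nth c (c :: cs) i) <= Vlo (Node false c cs).
Proof. by move=> Hi; rewrite Vlo_nodeF; apply: fmax_ge; exact: (nth_mem_map (@Vlo R) (c :: cs) c i Hi). Qed.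

Lemma Vlo_ex_max c cs : exists2 i, (i < size (c :: cs))%N &
  Vlo (nth c (c :: cs) i) = Vlo (Node false c cs).
Proof. by rewrite Vlo_nodeF; apply: mem_map_nth; exact: fmax_mem. Qed.

Lemma tau_le c cs i : (tau (c :: cs) i <= (Vlo (Node false c cs))%:E)%E.
Proof.
apply: fmax_le => x; rewrite inE => /orP [/eqP ->|]; first by rewrite leNye.
move=> /mapP [j]; rewrite mem_filter mem_iota add0n => /andP [_ Hj] ->.
by rewrite lee_fin (set_nth_default c) //; apply: Vlo_ge_max.
Qed.

Lemma tau_ge c cs i k : (k < size (c :: cs))%N -> k != i ->
  ((Vlo (nth c (c :: cs) k))%:E <= tau (c :: cs) i)%E.
Proof.
move=> Hk Hki; apply: fmax_ge; rewrite inE; apply/orP; right.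
rewrite (set_nth_default (Leaf 0 0)) //.
apply: (map_f (fun j => (Vlo (nth (Leaf 0 0) (c :: cs) j))%:E)).
by rewrite mem_filter Hki mem_iota add0n Hk.
Qed.

Lemma trunc_dom (h : R -> \bar R) t x :
  (-oo < trunc h t x)%E = (t <= x%:E)%E && (-oo < h x)%E.
Proof. by rewrite /trunc; case: ifP. Qed.

Lemma domP (h : R -> \bar R) lo hi : Dom h = `[lo, hi]%classic ->
  forall x, (-oo < h x)%E = (lo <= x <= hi).
Proof.
move=> /seteqP [A B] x; apply/idP/idP => H.
- by have := A x H; rewrite /= in_itv.
- by apply: B; rewrite /= in_itv.
Qed.

Lemma node_env b c cs (F : nat -> R -> \bar R) :
  (forall i, (i < size (c :: cs))%N ->
     Vlo (nth c (c :: cs) i) <= Vhi (nth c (c :: cs) i) /\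
     Dom (F i) = `[Vlo (nth c (c :: cs) i), Vhi (nth c (c :: cs) i)]%classic /\
     exists M : R, forall x, (F i x <= M%:E)%E) ->
  Vlo (Node b c cs) <= Vhi (Node b c cs) /\
  Dom (env [seq trunc (F i) (beta b (c :: cs) i) | i <- iota 0 (size (c :: cs))])
    = `[Vlo (Node b c cs), Vhi (Node b c cs)]%classic /\
  exists M : R, forall x,
    (env [seq trunc (F i) (beta b (c :: cs) i) | i <- iota 0 (size (c :: cs))] x
      <= M%:E)%E.
Proof.
move=> H.
set fs := [seq _ | i <- _].
set n := size (c :: cs).
have Hdom : forall i, (i < n)%N -> forall x,
    (-oo < F i x)%E = (Vlo (nth c (c :: cs) i) <= x <= Vhi (nth c (c :: cs) i)).
  by move=> i Hi x; have [_ [HD _]] := H i Hi; apply: domP.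
have [M HM] : exists M : R, forall f, f \in fs -> forall x, (f x <= M%:E)%E.
  apply: (@unif_bound R _ fs (fun f x => f x)) => f /mapP [i]; rewrite mem_iota add0n => Hi ->.
  have [_ [_ [M HM]]] := H i Hi; exists M => x; rewrite /trunc; case: ifP => // _.
  by rewrite leNye.
have lohi : Vlo (Node b c cs) <= Vhi (Node b c cs).
  case: b {fs HM}.
  - have [Hl _] := H 0%N isT.
    exact: (le_trans (Vlo_le_min c cs 0 isT) (le_trans Hl (Vhi_ge true c cs 0 isT))).
  - have [k Hk Ek] := Vlo_ex_max c cs.
    rewrite -Ek; have [Hl _] := H k Hk.
    by apply: (le_trans Hl); exact: (Vhi_ge false c cs k Hk).
have [j Hj Ej] := Vhi_ex b c cs.
have [Hd Hb] : Dom (env fs) = `[Vlo (Node b c cs), Vhi (Node b c cs)]%classic /\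
    forall x, (env fs x <= M%:E)%E.
  apply: (@env_dom R fs _ _ M lohi HM); clear HM; rewrite /fs; clear fs.
  - move=> f /mapP [i]; rewrite mem_iota add0n => Hi -> x.
    rewrite trunc_dom Hdom // => /andP [Hb /andP [Hx1 Hx2]].
    apply/andP; split; last by apply: (le_trans Hx2); apply: Vhi_ge.
    case: b Hb {lohi Ej}; rewrite /beta => Hb.
    + by apply: (le_trans _ Hx1); apply: Vlo_le_min.
    + have [k Hk Ek] := Vlo_ex_max c cs.
      rewrite -Ek; case: (eqVneq k i) => [->|Nki] //.
      by rewrite -lee_fin; exact: (le_trans (tau_ge c cs i k Hk Nki) Hb).
  - case: b {lohi Ej}.
    + have [k Hk Ek] := Vlo_ex_min c cs.
      exists (trunc (F k) (beta true (c :: cs) k)).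
        by apply: (map_f (fun i => trunc (F i) (beta true (c :: cs) i))); rewrite mem_iota add0n.
      rewrite trunc_dom /beta leNye andTb Hdom // -Ek lexx andTb.
      by have [? _] := H k Hk.
    + have [k Hk Ek] := Vlo_ex_max c cs.
      exists (trunc (F k) (beta false (c :: cs) k)).
        by apply: (map_f (fun i => trunc (F i) (beta false (c :: cs) i))); rewrite mem_iota add0n.
      rewrite trunc_dom /beta tau_le andTb Hdom // -Ek lexx andTb.
      by have [? _] := H k Hk.
  - exists (trunc (F j) (beta b (c :: cs) j)).
      by apply: (map_f (fun i => trunc (F i) (beta b (c :: cs) i))); rewrite mem_iota add0n.
    rewrite trunc_dom Hdom // Ej lexx andbT.
    have [? _] := H j Hj; rewrite -Ej; apply/andP; split => //.
    case: b lohi Ej; rewrite /beta; first by rewrite leNye.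
    move=> lohi Ej; apply: (le_trans (tau_le c cs j)).
    by rewrite lee_fin Ej.
by split => //; split => //; exists M.
Qed.

End G.

Set Implicit Arguments.
Section H.
Variable R : realType.

Lemma seg_split (pts : seq (R * R)) x : pts != [::] ->
  (head (0, 0) pts).1 <= x <= (last (0, 0) pts).1 ->
  (exists2 q, q \in pts & q.1 = x) \/
  (exists k, (k.+1 < size pts)%N /\
     (nth (0, 0) pts k).1 <= x <= (nth (0, 0) pts k.+1).1).
Proof.
elim: pts => [|a l IH] // _.
case: l IH => [|b l'] IH /=.
  move=> H; left; exists a; first by rewrite mem_head.
  by move: H => /andP [H1 H2]; apply: le_anti; rewrite H1 H2.
move=> /andP [H1 H2].
case: (leP x b.1) => Hxb.
  by right; exists 0%N; rewrite H1 Hxb.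
have [[q Hq Eq]|[k [Hk Hk2]]] := IH isT (introT andP (conj (ltW Hxb) H2)).
  by left; exists q => //; rewrite inE Hq orbT.
by right; exists k.+1.
Qed.

Lemma pwl_dom (h : R -> \bar R) lo hi : is_pwl h lo hi ->
  Dom h = `[lo, hi]%classic /\ exists M : R, forall x, (h x <= M%:E)%E.
Proof.
move=> [pts [[Hne Hsort Hhd Hlst] [Hpts Hseg Hout]]].
set M := foldr Num.max 0 (map snd pts).
have HqM : forall q, q \in pts -> q.2 <= M.
  by move=> q Hq; apply: fmax_ge; rewrite inE (map_f snd Hq) orbT.
have Hin : forall x, lo <= x <= hi -> exists a : R, h x = a%:E /\ a <= M.
  move=> x Hx; rewrite -Hhd -Hlst in Hx.
  have [[q Hq Eq]|[k [Hk /andP [Hk1 Hk2]]]] := seg_split pts x Hne Hx.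
    by exists q.2; rewrite -Eq Hpts //; split => //; apply: HqM.
  have := Hseg k Hk x; rewrite Hk1 Hk2 => /(_ isT) ->.
  have aM : (nth (0, 0) pts k).2 <= M by apply: HqM; apply: mem_nth; apply: ltnW.
  have bM : (nth (0, 0) pts k.+1).2 <= M by apply: HqM; apply: mem_nth.
  move: (nth (0, 0) pts k) (nth (0, 0) pts k.+1) Hk1 Hk2 aM bM => a b Hk1 Hk2 aM bM.
  eexists; split; first reflexivity.
  have [E|lt] := eqVneq a.1 b.1.
    have -> : x - a.1 = 0 by apply/eqP; rewrite subr_eq0 eq_le Hk1 E Hk2.
    by rewrite !mul0r addr0.
  have lt' : a.1 < b.1 by rewrite lt_neqAle lt (le_trans Hk1 Hk2).
  have t0 : 0 <= (x - a.1) / (b.1 - a.1) by apply: divr_ge0; rewrite subr_ge0 // ltW.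
  have t1 : (x - a.1) / (b.1 - a.1) <= 1 by rewrite ler_pdivrMr ?subr_gt0 // mul1r; lra.
  rewrite mulrAC.
  move: t0 t1; set t := (x - a.1) / (b.1 - a.1) => t0 t1.
  nra.
split; last first.
  exists M => x; case: (boolP (lo <= x <= hi)) => Hx.
    by have [a [-> aM]] := Hin x Hx; rewrite lee_fin.
  by rewrite Hout ?leNye //; apply/negP.
rewrite /Dom; apply/seteqP; split => x /=; rewrite in_itv /=.
  move=> Hx; apply/negPn/negP => Hn.
  by move: Hx; rewrite Hout ?ltxx // => /negP; rewrite (negbTE Hn).
by move=> Hx; have [a [-> _]] := Hin x Hx; rewrite ltNyr.
Qed.

Lemma leaf_dom (r1 r2 : R) : Dom (leafEPF r1 r2) = `[r2, r2]%classic /\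
  exists M : R, forall x, (leafEPF r1 r2 x <= M%:E)%E.
Proof.
split; last by exists r1 => x; rewrite /leafEPF; case: ifP => _; rewrite ?leNye.
rewrite /Dom; apply/seteqP; split => x /=; rewrite in_itv /= /leafEPF -eq_le.
  by case: ifP => // /eqP ->; rewrite eqxx.
by move=> /eqP ->; rewrite eqxx ltNyr.
Qed.

End H.

Unset Implicit Arguments.
Section I.
Variable R : realType.
Variable P : game R -> Prop.
Hypothesis Hl : forall a b, P (Leaf a b).
Hypothesis Hn : forall b c cs, P c -> (forall i, P (nth c cs i)) -> P (Node b c cs).

Fixpoint gind (g : game R) : P g :=
  match g as g0 return P g0 with
  | Leaf a b => Hl a b
  | Node b c cs => Hn b c cs (gind c)
      ((fix F (l : seq (game R)) : forall i, P (nth c l i) :=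
          match l as l0 return forall i, P (nth c l0 i) with
          | [::] => fun i => match i as i0 return P (nth c [::] i0) with 0 => gind c | _.+1 => gind c end
          | d :: l' => fun i => match i as i0 return P (nth c (d :: l') i0) with
                                | 0 => gind d
                                | i'.+1 => F l' i'
                                end
          end) cs)
  end.
End I.

Section J.
Variable R : realType.

Definition Pinv (s : game R) : Prop :=
  Vlo s <= Vhi s /\ Dom (U s) = `[Vlo s, Vhi s]%classic /\
  exists M : R, forall x, (U s x <= M%:E)%E.

Lemma U_node b c cs : U (Node b c cs) =
  @env R [seq trunc (U (nth c (c :: cs) i)) (beta b (c :: cs) i)
      | i <- iota 0 (size (c :: cs))].
Proof.
change (@env R [seq trunc (nth (fun _ => -oo%E) (map (@U R) (c :: cs)) i) (beta b (c :: cs) i)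
   | i <- iota 0 (size (map (@U R) (c :: cs)))] =
  @env R [seq trunc (U (nth c (c :: cs) i)) (beta b (c :: cs) i)
      | i <- iota 0 (size (c :: cs))]).
rewrite size_map; congr env; apply/eq_in_map => i; rewrite mem_iota add0n => Hi.
by rewrite (nth_map c).
Qed.

Lemma allP (s : game R) : Pinv s.
Proof.
elim/gind: s => [r1 r2|b c cs Hc Hcs].
  rewrite /Pinv /=; split => //; exact: leaf_dom.
rewrite /Pinv U_node.
apply: node_env => i Hi.
by case: i Hi => [|i] Hi //=; apply: Hcs.
Qed.

Lemma subtree_rcons (g : game R) p i : subtree g (rcons p i) =
  obind (fun s => if (i < size (children s))%N then Some (nth s (children s) i) else None)
        (subtree g p).
Proof.
elim: p g => [|j p IH] g /=; first by case: ifP.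
by case: ifP.
Qed.

Lemma Ut_fact (g : game R) Ut p s : learned g Ut -> subtree g p = Some s ->
  Dom (Ut p) = `[Vlo s, Vhi s]%classic /\ exists M : R, forall x, (Ut p x <= M%:E)%E.
Proof.
move=> HL Hs; have := HL p s Hs.
case: s Hs => [r1 r2|b c cs] Hs.
  by move=> ->; exact: leaf_dom.
exact: pwl_dom.
Qed.

End J.

Theorem lemma1 (R : realType) (g : game R) (Ut : seq nat -> R -> \bar R) :
  learned g Ut ->
  forall (p : seq nat) (s : game R), subtree g p = Some s ->
    [/\ Dom (U s) = `[Vlo s, Vhi s]%classic,
        Dom (U' s) = `[Vlo s, Vhi s]%classic,
        Dom (Ut p) = `[Vlo s, Vhi s]%classic
      & Dom (target Ut p s) = `[Vlo s, Vhi s]%classic].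
Proof.
move=> HL p s Hs.
have [Plh [PD PB]] := allP R s.
have [UD UB] := @Ut_fact R g Ut p s HL Hs.
split => //.
- case: s Hs Plh PD PB UD UB => [r1 r2|b c cs] Hs Plh PD PB UD UB //.
  rewrite /U'.
  have [_ [D _]] := @node_env R b c cs (fun i => U (nth c (c :: cs) i))
    (fun i Hi => allP R (nth c (c :: cs) i)).
  exact: D.
- case: s Hs Plh PD PB UD UB => [r1 r2|b c cs] Hs Plh PD PB UD UB //.
  rewrite /target.
  suff H : forall i, (i < size (c :: cs))%N ->
     Vlo (nth c (c :: cs) i) <= Vhi (nth c (c :: cs) i) /\
     Dom (Ut (rcons p i)) = `[Vlo (nth c (c :: cs) i), Vhi (nth c (c :: cs) i)]%classic /\
     exists M : R, forall x, (Ut (rcons p i) x <= M%:E)%E.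
    by have [_ [D _]] := @node_env R b c cs (fun i => Ut (rcons p i)) H; exact: D.
  move=> i Hi.
  have [lh _] := allP R (nth c (c :: cs) i).
  split => //.
  apply: (@Ut_fact R g Ut _ _ HL).
  by rewrite subtree_rcons Hs /= Hi (set_nth_default c).
Qed.
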